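(* Let $d\in\mathbb{N}$. The set $\Pi\subset\mathbb{R}^d\times\mathbb{R}^d$ is Lebesgue measurable and has Lebesgue measure $0$. Moreover, for every $x\in\mathbb{R}^d$, the set $\Phi(x)\subset\mathbb{R}^d$ has Lebesgue measure $0$.
   Context: For $z\in\mathbb{R}^d$, $\|z\|$ denotes the sup-norm distance from $z$ to $\mathbb{Z}^d$. Write $\mathbb{N}=\{1,2,3,\dots\}$. For $\psi:\mathbb{N}\to\mathbb{R}_{\ge 0}$, let $W(\psi)$ be the set of pairs $(x,y)\in\mathbb{R}^d\times\mathbb{R}^d$ for which $\|nx+y\|<\psi(n)$ holds for infinitely many $n\in\mathbb{N}$. $\mathcal{D}$ is the set of all non-increasing $\psi:\mathbb{N}\to\mathbb{R}_{\ge0}$ with $\sum_n\psi(n)^d=\infty$. $\Pi=\bigcap_{\psi\in\mathcal{D}}W(\psi)$, and $\Phi(x)=\{y\in\mathbb{R}^d:(x,y)\in\Pi\}$. *)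

(* Defs.v *)
From HB Require Import structures.
From mathcomp Require Import all_boot all_order all_algebra.
From mathcomp Require Import all_classical all_reals all_analysis.
Set Implicit Arguments.
Unset Strict Implicit.
Unset Printing Implicit Defensive.
Import Order.TTheory GRing.Theory Num.Theory.
Local Open Scope classical_set_scope.
Local Open Scope ring_scope.

Section Defs.
Variable R : realType.

Definition box (n : nat) (a b : 'rV[R]_n) : set 'rV[R]_n :=
  [set z | forall i : 'I_n, a ord0 i <= z ord0 i <= b ord0 i].

Definition box_vol (n : nat) (a b : 'rV[R]_n) : R :=
  \prod_(i < n) Num.max 0 (b ord0 i - a ord0 i).

Definition lebesgue_outer (n : nat) (A : set 'rV[R]_n) : \bar R :=
  ereal_inf [set s | exists a b : nat -> 'rV[R]_n,
    A `<=` \bigcup_k box (a k) (b k) /\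
    s = (\sum_(k <oo) (box_vol (a k) (b k))%:E)%E].

Definition lebesgue_measurable (n : nat) (A : set 'rV[R]_n) : Prop :=
  caratheodory_measurable (@lebesgue_outer n) A.

(** Identification of R^d x R^d with R^(d+d). *)
Definition pair_set (d : nat) (P : set ('rV[R]_d * 'rV[R]_d)) : set 'rV[R]_(d + d) :=
  [set z | P (lsubmx z, rsubmx z)].

(** ||z|| : sup-norm distance from z to Z^d. *)
Definition distZ (d : nat) (z : 'rV[R]_d) : R :=
  inf [set \big[Num.max/0]_(i < d) `|z ord0 i - (k i)%:~R|
       | k in [set: 'I_d -> int]].

(** W(psi); psi is only used at n >= 1 (N = {1,2,...}). *)
Definition W (d : nat) (psi : nat -> R) : set ('rV[R]_d * 'rV[R]_d) :=
  [set xy | forall N : nat, exists n : nat,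
     (N <= n)%N /\ (0 < n)%N /\ distZ (n%:R *: xy.1 + xy.2) < psi n].

Definition inD (d : nat) (psi : nat -> R) : Prop :=
  (forall n : nat, (0 < n)%N -> 0 <= psi n) /\
  (forall m n : nat, (0 < m)%N -> (m <= n)%N -> psi n <= psi m) /\
  (forall M : R, exists N : nat, M < \sum_(1 <= n < N) psi n ^+ d).

Definition Pi (d : nat) : set ('rV[R]_d * 'rV[R]_d) :=
  [set xy | forall psi : nat -> R, inD d psi -> @W d psi xy].

Definition Phi (d : nat) (x : 'rV[R]_d) : set 'rV[R]_d :=
  [set y | @Pi d (x, y)].

End Defs.

(* Main.v *)
Require Import Defs.
From HB Require Import structures.
From mathcomp Require Import all_boot all_order all_algebra.
From mathcomp Require Import all_classical all_reals all_analysis.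
From mathcomp Require Import ring lra zify.
Import Order.TTheory GRing.Theory Num.Theory.
Import numFieldNormedType.Exports.
Local Open Scope classical_set_scope.
Local Open Scope ring_scope.

Section Outer.
Variables (R : realType) (m : nat).
Local Notation n := m.+1.
Local Notation V := 'rV[R]_n.
Local Notation lo := (@lebesgue_outer R n).

Lemma box_vol_ge0 (a b : V) : 0 <= box_vol a b.
Proof. by apply: prodr_ge0 => i _; rewrite le_max lexx. Qed.

Lemma lo_ge0 (A : set V) : (0 <= lo A)%E.
Proof.
apply: le_ereal_inf_tmp => _ [a [b [_ ->]]].
by apply: nneseries_ge0 => k _ _; rewrite lee_fin box_vol_ge0.
Qed.

Lemma lo_le_cover (A : set V) (a b : nat -> V) :
  A `<=` \bigcup_k box (a k) (b k) ->
  (lo A <= \sum_(k <oo) (box_vol (a k) (b k))%:E)%E.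
Proof. by move=> AB; apply: ereal_inf_lbound; exists a, b. Qed.

Lemma box_vol0 (a : V) : box_vol a a = 0.
Proof.
rewrite /box_vol (bigD1 ord0) //= subrr maxxx mul0r //.
Qed.

Lemma lo0 : lo set0 = 0%E.
Proof.
apply/eqP; rewrite eq_le lo_ge0 andbT.
apply: (le_trans (@lo_le_cover set0 (fun _ => 0) (fun _ => 0) _)) => //.
rewrite eseries0 // => k _ _; by rewrite box_vol0.
Qed.

Lemma lo_le (A B : set V) : A `<=` B -> (lo A <= lo B)%E.
Proof.
move=> AB; apply: le_ereal_inf_tmp => _ [a [b [Bc ->]]].
apply: ereal_inf_lbound; exists a, b; split => //; exact: subset_trans Bc.
Qed.

Local Open Scope ereal_scope.
Lemma lo_sigma_subadditive : sigma_subadditive lo.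
Proof.
move=> A; have [[i ioo]|] := pselect (exists i, lo (A i) = +oo).
  rewrite (eseries_pinfty _ _ ioo) ?leey// => k _.
  by rewrite -ltNye (lt_le_trans _ (lo_ge0 _)).
rewrite -forallNE => Aoo.
suff add2e (e : {posnum R}) :
    lo (\bigcup_n A n) <= \sum_(i <oo) lo (A i) + e%:num%:E.
  by apply/lee_addgt0Pr => _/posnumP[].
rewrite (le_trans _ (epsilon_trick _ _ _))//; last first.
  by move=> k; exact: lo_ge0.
pose P k (ab : (nat -> V) * (nat -> V)) :=
  A k `<=` \bigcup_i box (ab.1 i) (ab.2 i) /\
  \sum_(i <oo) (box_vol (ab.1 i) (ab.2 i))%:E <= lo (A k) + (e%:num / (2 ^ k.+1)%:R)%:E.
have [G PG] : {G : nat -> (nat -> V) * (nat -> V) & forall k, P k (G k)}.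
  apply: (@choice _ _ P) => k; rewrite /P /lebesgue_outer.
  set S := (X in ereal_inf X); move infS : (ereal_inf S) => iS.
  case: iS infS => [r Sr|Soo|Soo].
  - have en1 : (0 < e%:num / (2 ^ k.+1)%:R)%R by [].
    have /(lb_ereal_inf_adherent en1) : ereal_inf S \is a fin_num by rewrite Sr.
    move=> [x [a [b [Ac ->]]] xS].
    by exists (a, b); split => //; rewrite -Sr; exact/ltW.
  - by have := Aoo k; rewrite /lebesgue_outer -/S Soo.
  - suff : lbound S 0 by move/le_ereal_inf_tmp; rewrite Soo.
    by move=> /= _ [a [b [_ ->]]]; apply: nneseries_ge0 => i _ _; rewrite lee_fin box_vol_ge0.
pose h (p : nat * nat) := (box_vol ((G p.1).1 p.2) ((G p.1).2 p.2))%:E.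
have h0 p : 0 <= h p by rewrite lee_fin box_vol_ge0.
apply: (@le_trans _ _ (\esum_(i in setT) h i)).
  have /card_esym/ppcard_eqP[f] := card_nat2.
  apply: (le_trans (@lo_le_cover _ (fun i => (G (f i).1).1 (f i).2)
                                (fun i => (G (f i).1).2 (f i).2) _)).
    move=> t [i _ /(PG i).1 [j _ Bijt]]; exists (f^-1%FUN (i, j)) => //=.
    by rewrite invK ?inE.
  rewrite -(esum_pred_image h _ xpredT) ?[fun=> _]set_true//.
  by rewrite image_eq.
rewrite (_ : esum _ _ = \sum_(i <oo) \sum_(j <oo ) h (i, j)); last first.
  pose J : nat -> set (nat * nat) := fun i => [set (i, j) | j in setT].
  rewrite (_ : setT = \bigcup_k J k); last first.
    by rewrite predeqE => -[a b]; split => // _; exists a => //; exists b.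
  rewrite esum_bigcupT /=; last 2 first.
    - apply/trivIsetP => i j _ _ ij.
      rewrite predeqE => -[k l] /=; split => //= -[] [_] _ [<-{k} _].
      by move=> [m' _] [] /esym/eqP; rewrite (negbTE ij).
    - by [].
  rewrite -(image_id [set: nat]) -fun_true esum_pred_image//; last first.
    by move=> k _; exact: esum_ge0.
  apply: eq_eseriesr => /= j _.
  rewrite -(esum_pred_image h (pair j) predT)//=; last first.
    by move=> ? ? _ _; exact: (@can_inj _ _ _ snd).
  by congr esum; rewrite predeqE => -[a b]; split; move=> [i _ <-]; exists i.
apply: lee_lim.
- apply: is_cvg_nneseries => k *.
  by apply: nneseries_ge0 => l *; exact: h0.
- by apply: is_cvg_nneseries => k *; apply: adde_ge0 => //; exact: lo_ge0.
- by near=> k; apply: lee_sum => i _; exact: (PG i).2.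
Unshelve. all: by end_near. Qed.

HB.instance Definition _ := isOuterMeasure.Build R V lo
  lo0 lo_ge0 lo_le lo_sigma_subadditive.


Local Close Scope ereal_scope.
Lemma max0_split (a b c : R) :
  Num.max 0 (Num.min b c - a) + Num.max 0 (b - Num.max a c) = Num.max 0 (b - a).
Proof.
rewrite /Num.min /Num.max /Order.min /Order.max.
repeat case: ifP; rewrite ?subr_lt0 ?subr_gt0 => *; try lra.
Qed.

Definition setc (v : V) (i : 'I_n) (r : R) : V :=
  \row_j (if j == i then r else v ord0 j).

Lemma vol_split (a b : V) i c :
  box_vol a (setc b i (Num.min (b ord0 i) c)) + box_vol (setc a i (Num.max (a ord0 i) c)) b
  = box_vol a b.
Proof.
rewrite /box_vol (bigD1 i) //= [X in _ + X](bigD1 i) //= [X in _ = X](bigD1 i) //=.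
rewrite !mxE !eqxx.
have E1 : \prod_(j < n | j != i) Num.max 0 (setc b i (Num.min (b ord0 i) c) ord0 j - a ord0 j)
        = \prod_(j < n | j != i) Num.max 0 (b ord0 j - a ord0 j).
  by apply: eq_bigr => j /negbTE ji; rewrite !mxE ji.
have E2 : \prod_(j < n | j != i) Num.max 0 (b ord0 j - setc a i (Num.max (a ord0 i) c) ord0 j)
        = \prod_(j < n | j != i) Num.max 0 (b ord0 j - a ord0 j).
  by apply: eq_bigr => j /negbTE ji; rewrite !mxE ji.
by rewrite E1 E2 -mulrDl max0_split.
Qed.

Local Open Scope ereal_scope.
Lemma split_meas (i : 'I_n) (c : R) (H : set V) :
  [set z : V | (z ord0 i < c)%R] `<=` H -> H `<=` [set z : V | (z ord0 i <= c)%R] ->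
  lo.-caratheodory H.
Proof.
move=> H1 H2; apply: le_caratheodory_measurable => X.
change (lo (X `&` H) + lo (X `&` ~` H) <= lo X).
rewrite [X in _ <= X]/lebesgue_outer; apply: le_ereal_inf_tmp => _ [a [b [Xc ->]]].
pose b' k := setc (b k) i (Num.min (b k ord0 i) c).
pose a' k := setc (a k) i (Num.max (a k ord0 i) c).
apply: le_trans (leeD (@lo_le_cover _ a b' _) (@lo_le_cover _ a' b _)) _.
- move=> z [Xz Hz]; case: (Xc z Xz) => k _ zk; exists k => // j.
  rewrite /b' !mxE; case: eqP => [->|_]; last exact: zk.
  have := zk i; have := H2 _ Hz; rewrite /= => zc /andP[-> zb].
  by rewrite le_min zb zc.
- move=> z [Xz Hz]; case: (Xc z Xz) => k _ zk; exists k => // j.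
  rewrite /a' !mxE; case: eqP => [->|_]; last exact: zk.
  have cz : (c <= z ord0 i)%R.
    by rewrite leNgt; apply/negP => zc; apply: Hz; apply: H1.
  have := zk i => /andP[az ->]; by rewrite ge_max az cz.
- rewrite -nneseriesD; last 2 first.
    by move=> k _ _; rewrite lee_fin box_vol_ge0.
    by move=> k _ _; rewrite lee_fin box_vol_ge0.
  apply: lee_nneseries => k _; first by rewrite adde_ge0 // lee_fin box_vol_ge0.
  by rewrite -EFinD lee_fin /a' /b' vol_split.
Qed.

Lemma halfle_meas (i : 'I_n) (c : R) : lo.-caratheodory [set z : V | (z ord0 i <= c)%R].
Proof. by apply: (@split_meas i c) => // z /= /ltW. Qed.

Lemma halfge_meas (i : 'I_n) (c : R) : lo.-caratheodory [set z : V | (c <= z ord0 i)%R].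
Proof.
have -> : [set z : V | (c <= z ord0 i)%R] = ~` [set z : V | (z ord0 i < c)%R].
  apply/seteqP; split => z /=; rewrite ltNge.
    by move=> -> .
  by move/negP/negbNE.
apply: caratheodory_measurable_setC.
by apply: (@split_meas i c) => // z /= /ltW.
Qed.

Lemma box_meas (a b : V) : lo.-caratheodory (box a b).
Proof.
pose S (k : nat) : set V := if (k < n)%N =P true is ReflectT kn then
   [set z : V | (a ord0 (Ordinal kn) <= z ord0 (Ordinal kn))%R] `&`
   [set z : V | (z ord0 (Ordinal kn) <= b ord0 (Ordinal kn))%R] else setT.
have -> : box a b = \bigcap_k S k.
  apply/seteqP; split => z.
    move=> zb k _; rewrite /S; case: eqP => // kn.
    by move: (zb (Ordinal kn)) => /andP[].
  move=> zS i; have := zS (nat_of_ord i) I; rewrite /S; case: eqP => [kn|]; last by rewrite ltn_ord.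
  have -> : Ordinal kn = i by apply: val_inj.
  by move=> [? ?]; apply/andP.
rewrite -[\bigcap_k S k]setCK setC_bigcap.
apply: caratheodory_measurable_setC; apply: caratheodory_measurable_bigcup => k.
apply: caratheodory_measurable_setC; rewrite /S; case: eqP => kn.
  apply: caratheodory_measurable_setI; [exact: halfge_meas|exact: halfle_meas].
rewrite -setC0; apply: caratheodory_measurable_setC; exact: caratheodory_measurable_set0.
Qed.


Lemma cara_bigcap (F : nat -> set V) : (forall j, lo.-caratheodory (F j)) ->
  lo.-caratheodory (\bigcap_j F j).
Proof.
move=> mF; rewrite -[\bigcap_k F k]setCK setC_bigcap.
apply: caratheodory_measurable_setC; apply: caratheodory_measurable_bigcup => k.
exact: caratheodory_measurable_setC.
Qed.

Lemma null_liminf (S : set V) :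
  (forall e : R, (0 < e)%R -> exists F : nat -> set V,
     (forall j, lo.-caratheodory (F j)) /\ (forall j, lo (F j) <= e%:E) /\
     (forall z, S z -> exists J, forall j, (J <= j)%N -> F j z)) ->
  lo S = 0.
Proof.
move=> hS; apply/eqP; rewrite eq_le lo_ge0 andbT.
apply/lee_addgt0Pr => e e0; rewrite add0e.
have [F [mF [leF SF]]] := hS e e0.
pose A J := \bigcap_j F (J + j)%N.
have mA J : lo.-caratheodory (A J) by apply: cara_bigcap => j; exact: mF.
have mUA : lo.-caratheodory (\bigcup_J A J) by exact: caratheodory_measurable_bigcup.
have hA : {homo A : p q / (p <= q)%N >-> (p <= q)%O}.
  move=> p q pq; apply/subsetPset => z Az j _; have := Az (q - p + j)%N I.
  by rewrite addnA subnKC.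
pose LO : {outer_measure set V -> \bar R} := OuterMeasure.clone R V lo _.
have cv := @nondecreasing_cvg_mu _ (caratheodory_type LO) R (LO : set (caratheodory_type LO) -> _) A mA mUA hA.
apply: (le_trans (@lo_le S (\bigcup_J A J) _)).
  move=> z /SF [J HJ]; exists J => // j _; apply: HJ; exact: leq_addr.
change (LO (\bigcup_J A J) <= e%:E); rewrite -(cvg_lim _ cv) //; apply: lime_le; first by apply/cvg_ex; eexists; exact: cv.
near=> J => /=; apply: le_trans (leF J); apply: lo_le => z Az.
by have := Az 0%N I; rewrite addn0.
Unshelve. all: by end_near. Qed.


Local Close Scope ereal_scope.
Lemma box_vol_empty : box_vol (const_mx 1 : V) 0 = 0.
Proof. by rewrite /box_vol (bigD1 ord0) //= !mxE sub0r max_l ?mul0r // lerN10. Qed.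

Lemma fin_boxes (T : finType) (a b : T -> V) : exists a' b' : nat -> V,
  (forall p z, box (a p) (b p) z -> exists k, box (a' k) (b' k) z) /\
  (\sum_(k <oo) (box_vol (a' k) (b' k))%:E = (\sum_p box_vol (a p) (b p))%:E)%E.
Proof.
pose sab := [seq (a p, b p) | p <- enum T].
pose d0 : V * V := (const_mx 1, 0).
exists (fun k => (nth d0 sab k).1), (fun k => (nth d0 sab k).2); split.
  move=> p z zb; exists (index p (enum T)).
  have pi : (index p (enum T) < size (enum T))%N by rewrite index_mem mem_enum.
  by rewrite /sab (nth_map p) //= nth_index ?mem_enum.
rewrite (nneseries_split 0 (size sab)); last by move=> k _; rewrite lee_fin box_vol_ge0.
rewrite add0n [X in (_ + X)%E]eseries0 ?adde0; last first.
  by move=> k /= kN _; rewrite nth_default // box_vol_empty.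
rewrite sumEFin; congr EFin.
rewrite -(big_nth d0 xpredT (fun q => box_vol q.1 q.2)) big_map big_enum //.
Qed.

Lemma boxes_meas (a b : nat -> V) : lo.-caratheodory (\bigcup_k box (a k) (b k)).
Proof. by apply: caratheodory_measurable_bigcup => k; exact: box_meas. Qed.


Lemma null_boxes (S : set V) (E : R -> nat -> set V) :
  (forall e, 0 < e -> forall z, S z -> exists J, forall j, (J <= j)%N -> E e j z) ->
  (forall e, 0 < e -> forall j, (0 < j)%N -> exists (T : finType) (a b : T -> V),
      \sum_p box_vol (a p) (b p) <= e /\
      (forall z, E e j z -> exists p, box (a p) (b p) z)) ->
  lo S = 0%E.
Proof.
move=> hS hE; apply: null_liminf => e e0.
have: forall j, exists ab : (nat -> V) * (nat -> V), ((0 < j)%N ->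
    E e j `<=` \bigcup_k box (ab.1 k) (ab.2 k)) /\
    (\sum_(k <oo) (box_vol (ab.1 k) (ab.2 k))%:E <= e%:E)%E.
  move=> j; case: (posnP j) => [->|j0].
    exists (fun _ => const_mx 1, fun _ => 0); split => //.
    by rewrite eseries0 ?lee_fin ?ltW // => k _ _; rewrite /= box_vol_empty.
  have [T [a [b [sab Ecov]]]] := hE e e0 j j0.
  have [a' [b' [cov eqs]]] := fin_boxes _ a b.
  exists (a', b'); split; last by rewrite eqs lee_fin.
  move=> _ z /Ecov [p /cov [k zk]]; by exists k.
move=> /choice [G HG].
exists (fun j => \bigcup_k box ((G j).1 k) ((G j).2 k)); split; [|split].
- move=> j; exact: boxes_meas.
- move=> j; exact: (le_trans (@lo_le_cover _ (G j).1 (G j).2 (subset_refl _)) (HG j).2).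
- move=> z /(hS e e0) [J HJ]; exists J.+1 => j Jj.
  by apply: (HG j).1 (leq_ltn_trans (leq0n J) Jj) _ _; apply: HJ; exact: ltnW.
Qed.

End Outer.


Section Dist.
Variables (R : realType) (d : nat).

Lemma distZ_ge0 (z : 'rV[R]_d) : 0 <= distZ z.
Proof.
apply: lb_le_inf.
  by exists (\big[Num.max/0]_(i < d) `|z ord0 i - (0 : int)%:~R|), (fun _ => 0).
move=> _ [k _ <-]; elim/big_ind: _ => //.
by move=> a b a0 b0; rewrite le_max a0.
Qed.

Lemma distZ_lt (z : 'rV[R]_d) (r : R) : distZ z < r ->
  exists k : 'I_d -> int, forall i, `|z ord0 i - (k i)%:~R| < r.
Proof.
move=> /inf_lt [].
  by exists (\big[Num.max/0]_(i < d) `|z ord0 i - (0 : int)%:~R|), (fun _ => 0).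
move=> _ [k _ <-] /bigmax_ltP [_ H]; exists k => i; exact: H.
Qed.
End Dist.

Fixpoint runmin (R : realType) (u : nat -> R) (k : nat) : R :=
  if k is k2.+1 then Num.min (runmin R u k2) (u k) else u 1%N.
Section Key.
Variables (R : realType) (d : nat).
Hypothesis hd : (0 < d)%N.
Variables (x y : 'rV[R]_d).

Let u (k : nat) := distZ (k%:R *: x + y).
Let psi (k : nat) := runmin R u k.

Let u_ge0 k : 0 <= u k. Proof. exact: distZ_ge0. Qed.

Let psiS k : psi k.+1 = Num.min (psi k) (u k.+1).
Proof. by []. Qed.

Let psi_ge0 k : 0 <= psi k.
Proof. by elim: k => [|k IH]; [exact: u_ge0|rewrite psiS le_min IH u_ge0]. Qed.

Let psi_le k : (0 < k)%N -> psi k <= u k.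
Proof. by case: k => // k _; rewrite psiS ge_min lexx orbT. Qed.

Let psi_anti a b : (a <= b)%N -> psi b <= psi a.
Proof.
elim: b => [|b IH]; first by rewrite leqn0 => /eqP ->.
rewrite leq_eqVlt => /orP[/eqP -> //|]; rewrite ltnS => /IH.
by apply: le_trans; rewrite psiS ge_min lexx.
Qed.

Let psi_lb c k : c <= u 1%N -> (forall i, (1 <= i <= k)%N -> c <= u i) -> c <= psi k.
Proof.
move=> c1; elim: k => [|k IH] H; first by rewrite /psi /=.
rewrite psiS le_min IH ?H ?leqnn //.
by move=> i /andP[i1 ik]; apply: H; rewrite i1 (leq_trans ik).
Qed.

Let S N := \sum_(1 <= k < N) psi k ^+ d.

Let S_mono a b : (a <= b)%N -> S a <= S b.
Proof.
move=> ab; case: (leqP a 1) => a1.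
  by rewrite /S (big_geq a1) sumr_ge0 // => k _; rewrite exprn_ge0.
rewrite /S (big_cat_nat (ltnW a1) ab) /= lerDl sumr_ge0 // => k _.
by rewrite exprn_ge0.
Qed.

Let le_pow j : (0 < j)%N -> (j <= j ^ d)%N.
Proof.
move=> j0; case: d hd => [|d' _] //. rewrite expnS leq_pmulr // expn_gt0 j0 //.
Qed.

Let block (th : R) j : 0 < th -> (0 < j)%N ->
  (forall k, (1 <= k <= (2 * j) ^ d)%N -> th / j%:R <= u k) ->
  S ((2 * j) ^ d).+1 >= S (j ^ d).+1 + th ^+ d.
Proof.
move=> th0 j0 H.
have jj : (j ^ d <= (2 * j) ^ d)%N by rewrite leq_exp2r // leq_pmull.
rewrite /S [X in _ <= X](@big_cat_nat _ _ _ (j ^ d).+1) //=.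
rewrite lerD2l.
have c0 : 0 <= th / j%:R by rewrite divr_ge0 // ltW.
have Hc : forall k, ((j ^ d).+1 <= k < ((2 * j) ^ d).+1)%N -> (th / j%:R) ^+ d <= psi k ^+ d.
  move=> k /andP[k1 k2]; rewrite lerXn2r // ?nnegrE //; apply: psi_lb.
    apply: H; rewrite leqnn /= expn_gt0 muln_gt0 j0 //.
  move=> i /andP[i1 ik]; apply: H; rewrite i1 /=; rewrite ltnS in k2; exact: leq_trans ik k2.
apply: le_trans (ler_sum_nat Hc); rewrite sumr_const_nat.
have cnt : (j ^ d <= ((2 * j) ^ d).+1 - (j ^ d).+1)%N.
  rewrite subSS expnMn; have : (2 <= 2 ^ d)%N.
    by case: d hd => // d' _; rewrite expnS leq_pmulr // expn_gt0.
  move: (j ^ d)%N => X; move: (2 ^ d)%N => Y; nia.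
have cd0 : 0 <= (th / j%:R) ^+ d by rewrite exprn_ge0.
rewrite -[X in _ <= X]mulr_natr.
have hN : ((j ^ d)%N%:R : R) <= (((2 * j) ^ d).+1 - (j ^ d).+1)%N%:R by rewrite ler_nat.
apply: le_trans (ler_wpM2l cd0 hN).
rewrite natrX expr_div_n divfK //.
by rewrite expf_neq0 // pnatr_eq0 -lt0n.
Qed.

Lemma key (th : R) : 0 < th -> @Pi R d (x, y) ->
  exists J, forall j, (J <= j)%N ->
    (0 < j)%N /\ exists k, (1 <= k <= (2 * j) ^ d)%N /\ u k < th / j%:R.
Proof.
move=> th0 Pxy; apply: contrapT; move/forallNP => HJ.
have H J : exists j, (J <= j)%N /\ (0 < j)%N /\
    forall k, (1 <= k <= (2 * j) ^ d)%N -> th / j%:R <= u k.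
  have /existsNP [j /not_implyP [Jj Hj]] := HJ J.+1.
  exists j; split; first exact: ltnW.
  split; first exact: leq_ltn_trans (leq0n J) Jj.
  move=> k kr; rewrite leNgt; apply/negP => ku; apply: Hj; split.
    exact: leq_ltn_trans (leq0n J) Jj.
  by exists k.
have unb t : exists N, t%:R * th ^+ d <= S N.
  elim: t => [|t [N HN]]; first by exists 0%N; rewrite mul0r /S big_geq.
  have [j [Nj [j0 Hj]]] := H N.
  exists ((2 * j) ^ d).+1; apply: le_trans; last exact: (block th j th0 j0 Hj).
  rewrite -natr1 mulrDl mul1r lerD2r; apply: le_trans HN _; apply: S_mono.
  exact: leq_trans Nj (leq_trans (le_pow j j0) (leqnSn _)).
have Dpsi : inD d psi.
  split; first by move=> k _; exact: psi_ge0.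
  split; first by move=> a b _; exact: psi_anti.
  move=> M; have thd : 0 < th ^+ d by rewrite exprn_gt0.
  have [t Ht] : exists t : nat, M < t%:R * th ^+ d.
    exists (Num.bound (`|M| / th ^+ d)).
    rewrite -ltr_pdivrMr //; apply: le_lt_trans (archi_boundP _).
      by rewrite ler_pM2r ?invr_gt0 // ler_norm.
    by rewrite divr_ge0 // ltW.
  have [N HN] := unb t; exists N; exact: lt_le_trans Ht HN.
have [k [_ [k0 hk]]] := Pxy psi Dpsi 0%N.
have := psi_le k k0; rewrite /u /= in hk *; move=> hle.
by have := lt_le_trans hk hle; rewrite ltxx.
Qed.

End Key.


Section Cells.
Variable R : realType.

Lemma ycell (K : nat) (dl w v yy : R) (k : int) : 0 < dl <= 1 ->
  - K%:R <= yy <= K%:R -> w <= v <= w + dl -> `|v + yy - k%:~R| < dl ->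
  exists t : 'I_(2 * K + 3),
    let c := (Num.floor w + (t : nat)%:Z - K%:Z)%:~R - w in
    c - 2 * dl <= yy <= c + dl.
Proof.
move=> /andP[d0 d1] /andP[y1 y2] /andP[wv1 wv2]; rewrite ltr_norml => /andP[k1 k2].
set f := Num.floor w.
have /andP[fw1 fw2] := floor_itv w; rewrite -/f in fw1 fw2.
have hk1 : (k%:~R : R) < (f + K%:Z + 3)%:~R.
  move: fw2; rewrite !intrD /= => fw2; rewrite [K%:Z%:~R]/= -!natz /=. lra.
have hk2 : ((f - K%:Z - 1)%:~R : R) < k%:~R.
  rewrite !intrD !intrN /=; move: fw1 => fw1. rewrite -!natz /=. lra.
rewrite ltr_int in hk1; rewrite ltr_int in hk2.
have t0 : 0 <= k - f + K%:Z by lia.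
have t1 : (`|(k - f + K%:Z)%R| < 2 * K + 3)%N by lia.
exists (Ordinal t1) => /=; rewrite gez0_abs //.
have -> : f + (k - f + K%:Z) - K%:Z = k by ring.
apply/andP; split; lra.
Qed.


Lemma xcell (K H : nat) (xx : R) : (0 < H)%N -> - K%:R <= xx <= K%:R ->
  exists g : 'I_(2 * K * H + 1),
    let s := ((g : nat)%:Z - (K * H)%:Z)%:~R / H%:R in
    s <= xx <= s + H%:R^-1.
Proof.
move=> H0 /andP[x1 x2].
have H0' : (0 : R) < H%:R by rewrite ltr0n.
set f := Num.floor (xx * H%:R).
have /andP[fw1 fw2] := floor_itv (xx * H%:R); rewrite -/f in fw1 fw2.
have e1 : xx * H%:R <= K%:R * H%:R by rewrite ler_pM2r.
have e2 : - K%:R * H%:R <= xx * H%:R by rewrite ler_pM2r.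
have hf1 : (f%:~R : R) <= (K * H)%:Z%:~R.
  by apply: le_trans fw1 _; rewrite -[((K * H)%:Z)%:~R]/(((K * H)%N)%:R : R) natrM.
have hf2 : (- (K * H)%:Z)%:~R < ((f + 1)%:~R : R).
  by apply: le_lt_trans fw2; rewrite intrN -[((K * H)%:Z)%:~R]/(((K * H)%N)%:R : R) natrM -mulNr.
rewrite ler_int in hf1; rewrite ltr_int in hf2.
have g1 : (`|(f + (K * H)%:Z)%R| < 2 * K * H + 1)%N by lia.
exists (Ordinal g1) => /=; rewrite gez0_abs; last by lia.
have -> : f + (K * H)%:Z - (K * H)%:Z = f by ring.
apply/andP; split.
  by rewrite ler_pdivrMr.
have -> : f%:~R / H%:R + H%:R^-1 = (f + 1)%:~R / H%:R :> R.
  by rewrite intrD mulrDl mul1r.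
by rewrite ler_pdivlMr // ltW.
Qed.


Lemma vol_const (n : nat) (a b : 'rV[R]_n) (c : R) : 0 <= c ->
  (forall i, b ord0 i - a ord0 i = c) -> box_vol a b = c ^+ n.
Proof.
move=> c0 h; rewrite /box_vol (eq_bigr (fun _ => c)) ?prodr_const ?card_ord //.
by move=> i _; rewrite h max_r.
Qed.

Lemma vol_row_mx (n1 n2 : nat) (a1 b1 : 'rV[R]_n1) (a2 b2 : 'rV[R]_n2) :
  box_vol (row_mx a1 a2) (row_mx b1 b2) = box_vol a1 b1 * box_vol a2 b2.
Proof.
rewrite /box_vol big_split_ord /=; congr (_ * _); apply: eq_bigr => i _;
  by rewrite ?row_mxEl ?row_mxEr.
Qed.

Lemma box_row_mx (n1 n2 : nat) (a1 b1 : 'rV[R]_n1) (a2 b2 : 'rV[R]_n2) (z : 'rV[R]_(n1 + n2)) :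
  box a1 b1 (lsubmx z) -> box a2 b2 (rsubmx z) -> box (row_mx a1 a2) (row_mx b1 b2) z.
Proof.
move=> h1 h2 i; case: (splitP i) => j ij.
  have -> : i = lshift n2 j by apply: val_inj.
  by rewrite !row_mxEl; have := h1 j; rewrite mxE.
have -> : i = rshift n1 j by apply: val_inj.
by rewrite !row_mxEr; have := h2 j; rewrite mxE.
Qed.

Lemma distZ_coord (d : nat) (x y : 'rV[R]_d) (k : nat) (r : R) :
  distZ (k%:R *: x + y) < r ->
  exists kk : 'I_d -> int, forall i, `|k%:R * x ord0 i + y ord0 i - (kk i)%:~R| < r.
Proof.
move=> /distZ_lt [kk hk]; exists kk => i; have := hk i; by rewrite !mxE.
Qed.


Lemma cover_phi (d : nat) (x : 'rV[R]_d) (K : nat) (th : R) (j : nat) :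
  0 < th <= 1 -> (0 < j)%N ->
  exists (T : finType) (a b : T -> 'rV[R]_d),
    \sum_p box_vol (a p) (b p) = ((6 * (2 * K + 3))%:R * th) ^+ d /\
    forall yv : 'rV[R]_d, (forall i, - K%:R <= yv ord0 i <= K%:R) ->
      (exists k, (1 <= k <= (2 * j) ^ d)%N /\ distZ (k%:R *: x + yv) < th / j%:R) ->
      exists p, box (a p) (b p) yv.
Proof.
move=> /andP[th0 th1] j0.
set M := ((2 * j) ^ d)%N; set L := (2 * K + 3)%N; set dl := th / j%:R.
have j0' : (0 : R) < j%:R by rewrite ltr0n.
have dl0 : 0 < dl by rewrite divr_gt0.
have dl1 : dl <= 1.
  by rewrite ler_pdivrMr // mul1r; apply: le_trans th1 _; rewrite ler1n.
pose T := ('I_M * {ffun 'I_d -> 'I_L})%type.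
pose w (p : T) i := (p.1.+1)%:R * x ord0 i.
pose c (p : T) i := (Num.floor (w p i) + (p.2 i : nat)%:Z - K%:Z)%:~R - w p i.
exists T, (fun p => \row_i (c p i - 2 * dl)), (fun p => \row_i (c p i + dl)); split.
  rewrite (eq_bigr (fun _ => (3 * dl) ^+ d)); last first.
    move=> p _; apply: vol_const; first by rewrite mulr_ge0 // ltW.
    by move=> i; rewrite !mxE; ring.
  rewrite sumr_const card_prod card_ffun !card_ord /M -[X in X = _]mulr_natr natrM !natrX.
  rewrite -!exprMn; congr (_ ^+ _).
  rewrite /dl (natrM _ 2 j) (natrM _ 6 L); field.
  by rewrite gt_eqF.
move=> yv yb [k [/andP[k1 kM] /distZ_coord [kk hk]]].
have : forall i, exists t : 'I_L,
    let cc := (Num.floor (k%:R * x ord0 i) + (t : nat)%:Z - K%:Z)%:~R - k%:R * x ord0 i in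
    cc - 2 * dl <= yv ord0 i <= cc + dl.
  move=> i; apply: (@ycell K dl (k%:R * x ord0 i) (k%:R * x ord0 i) (yv ord0 i) (kk i)).
  - by rewrite dl0 dl1.
  - exact: yb.
  - by rewrite lexx lerDl ltW.
  - exact: hk.
move=> /fin_all_exists [t ht].
have kM' : (k.-1 < M)%N by rewrite prednK.
exists (Ordinal kM', [ffun i => t i]) => i; rewrite !mxE /c /w /= ffunE prednK //.
Qed.


Lemma arith_bound (d j G L H K : nat) (th : R) : 0 < th -> (0 < j)%N -> (0 < H)%N ->
  (G <= (2 * K + 1) * H)%N ->
  (H%:R^-1 ^+ d * (3 * (th / j%:R)) ^+ d) *+ (((2 * j) ^ d) * G ^ d * L ^ d)%N
    <= ((6 * (2 * K + 1) * L)%:R * th) ^+ d.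
Proof.
move=> th0 j0 H0 GH.
have j0' : (0 : R) < j%:R by rewrite ltr0n.
have H0' : (0 : R) < H%:R by rewrite ltr0n.
rewrite -mulr_natr !natrM !natrX -!exprMn.
have hG : (G%:R : R) <= (2 * K + 1)%:R * H%:R by rewrite -natrM ler_nat.
apply: lerXn2r.
- by rewrite nnegrE !mulr_ge0 ?invr_ge0 ?divr_ge0 ?ler0n ?ltW.
- by rewrite nnegrE !mulr_ge0 ?ler0n ?ltW.
have -> : H%:R^-1 * (3 * (th / j%:R)) * ((2 * j)%:R * G%:R * L%:R)
    = (6 * L%:R * th) * (G%:R / H%:R).
  by rewrite (natrM _ 2 j); field; rewrite !gt_eqF.
have -> : 6 * (2 * K + 1)%:R * L%:R * th = (6 * L%:R * th) * (2 * K + 1)%:R by ring.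
apply: ler_wpM2l; first by rewrite !mulr_ge0 ?ler0n ?ltW.
by rewrite ler_pdivrMr.
Qed.
Lemma cover_pi (d : nat) (K : nat) (th : R) (j : nat) :
  0 < th <= 1 -> (0 < j)%N ->
  exists (T : finType) (a b : T -> 'rV[R]_(d + d)),
    \sum_p box_vol (a p) (b p) <= ((6 * (2 * K + 1) * (2 * K + 3))%:R * th) ^+ d /\
    forall z : 'rV[R]_(d + d), (forall i, - K%:R <= z ord0 i <= K%:R) ->
      (exists k, (1 <= k <= (2 * j) ^ d)%N /\
         distZ (k%:R *: lsubmx z + rsubmx z) < th / j%:R) ->
      exists p, box (a p) (b p) z.
Proof.
move=> /andP[th0 th1] j0.
set M := ((2 * j) ^ d)%N; set L := (2 * K + 3)%N; set dl := th / j%:R.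
have j0' : (0 : R) < j%:R by rewrite ltr0n.
have dl0 : 0 < dl by rewrite divr_gt0.
have dl1 : dl <= 1.
  by rewrite ler_pdivrMr // mul1r; apply: le_trans th1 _; rewrite ler1n.
have M0 : (0 < M)%N by rewrite expn_gt0 muln_gt0 j0.
set q1 := (Num.bound th^-1).+1.
have q1th : th^-1 <= q1%:R.
  apply: le_trans (ltW (archi_boundP _)) _; first by rewrite invr_ge0 ltW.
  by rewrite ler_nat.
set H := (M * j * q1)%N.
have H0 : (0 < H)%N by rewrite !muln_gt0 M0 j0.
have H0' : (0 : R) < H%:R by rewrite ltr0n.
set G := (2 * K * H + 1)%N.
pose T := ('I_M * {ffun 'I_d -> 'I_G} * {ffun 'I_d -> 'I_L})%type.
pose s (p : T) i := (((p.1.2 i : nat)%:Z - (K * H)%:Z)%:~R / H%:R : R).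
pose w (p : T) i := (p.1.1.+1)%:R * s p i.
pose c (p : T) i := (Num.floor (w p i) + (p.2 i : nat)%:Z - K%:Z)%:~R - w p i.
exists T, (fun p => row_mx (\row_i s p i) (\row_i (c p i - 2 * dl))),
  (fun p => row_mx (\row_i (s p i + H%:R^-1)) (\row_i (c p i + dl))); split.
  rewrite (eq_bigr (fun _ => H%:R^-1 ^+ d * (3 * dl) ^+ d)); last first.
    move=> p _; rewrite vol_row_mx; congr (_ * _); apply: vol_const.
    - by rewrite invr_ge0 ltW.
    - by move=> i; rewrite !mxE; ring.
    - by rewrite mulr_ge0 // ltW.
    - by move=> i; rewrite !mxE; ring.
  rewrite sumr_const !card_prod !card_ffun !card_ord.
  apply: (@arith_bound d j G L H K th) => //.
  by rewrite /G mulnDl mul1n leq_add2l.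
move=> z zb [k [/andP[k1 kM] /distZ_coord [kk hk]]].
have xb i : - K%:R <= lsubmx z ord0 i <= K%:R by rewrite mxE; exact: zb.
have yb i : - K%:R <= rsubmx z ord0 i <= K%:R by rewrite mxE; exact: zb.
have : forall i, exists g : 'I_G,
    let s := ((g : nat)%:Z - (K * H)%:Z)%:~R / H%:R in
    s <= lsubmx z ord0 i <= s + H%:R^-1.
  by move=> i; apply: xcell.
move=> /fin_all_exists [g hg].
have kH : k%:R / H%:R <= dl.
  have e1 : k%:R / H%:R <= M%:R / H%:R :> R.
    by rewrite ler_pM2r ?invr_gt0 // ler_nat.
  apply: le_trans e1 _.
  have q0 : (0 : R) < q1%:R by rewrite ltr0n.
  have M0' : (0 : R) < M%:R by rewrite ltr0n.
  have -> : M%:R / H%:R = j%:R^-1 * q1%:R^-1 :> R.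
    by rewrite /H !natrM; field; rewrite !gt_eqF.
  rewrite /dl mulrC ler_pM2r ?invr_gt0 //.
  by rewrite -[th]invrK lef_pV2 ?posrE ?invr_gt0.
have : forall i, exists t : 'I_L,
    let w := k%:R * (((g i : nat)%:Z - (K * H)%:Z)%:~R / H%:R) in
    let cc := (Num.floor w + (t : nat)%:Z - K%:Z)%:~R - w in
    cc - 2 * dl <= rsubmx z ord0 i <= cc + dl.
  move=> i; have /andP[h1 h2] := hg i.
  apply: (@ycell K dl _ (k%:R * lsubmx z ord0 i) (rsubmx z ord0 i) (kk i)).
  - by rewrite dl0 dl1.
  - exact: yb.
  - apply/andP; split; first by rewrite ler_wpM2l.
    apply: le_trans (ler_wpM2l (ler0n _ k) h2) _.
    by rewrite mulrDr lerD2l; exact: kH.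
  - exact: hk.
move=> /fin_all_exists [t ht].
have kM' : (k.-1 < M)%N by rewrite prednK.
exists ((Ordinal kM', [ffun i => g i]), [ffun i => t i]).
apply: box_row_mx => i; rewrite !mxE /c /w /s /= !ffunE ?prednK //.
  by have := hg i; rewrite mxE.
by have := ht i; rewrite mxE.
Qed.

End Cells.


Section Final.
Variable R : realType.

Lemma null_generic (m : nat) (S : set 'rV[R]_m.+1) (C : R) (P : R -> nat -> set 'rV[R]_m.+1) :
  0 <= C ->
  (forall th, 0 < th <= 1 -> forall z, S z -> exists J, forall j, (J <= j)%N -> P th j z) ->
  (forall th j, 0 < th <= 1 -> (0 < j)%N -> exists (T : finType) (a b : T -> 'rV[R]_m.+1),
     \sum_p box_vol (a p) (b p) <= C * th /\ (forall z, P th j z -> exists p, box (a p) (b p) z)) ->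
  lebesgue_outer S = 0%E.
Proof.
move=> C0 hS hE.
pose th (e : R) := Num.min 1 (e / (C + 1)).
have C1 : 0 < C + 1 by lra.
have thb e : 0 < e -> 0 < th e <= 1.
  move=> e0; rewrite /th ge_min lexx orTb andbT lt_min ltr01 /=.
  by rewrite divr_gt0.
apply: (@null_boxes R m S (fun e j => P (th e) j)).
  by move=> e e0 z Sz; exact: hS (thb e e0) z Sz.
move=> e e0 j j0; have [T [a [b [hs hc]]]] := hE (th e) j (thb e e0) j0.
exists T, a, b; split => //; apply: le_trans hs _.
have : th e <= e / (C + 1) by rewrite /th ge_min lexx orbT.
move=> h; apply: le_trans (ler_wpM2l C0 h) _.
rewrite mulrA ler_pdivrMr //; nra.
Qed.

Lemma pow_le_self (th : R) (d : nat) : 0 <= th <= 1 -> (0 < d)%N -> th ^+ d <= th.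
Proof.
move=> /andP[t0 t1]; case: d => // d _; rewrite exprS.
rewrite -[X in _ <= X]mulr1 ler_wpM2l //; exact: exprn_ile1.
Qed.

Lemma cube_cover (n : nat) (z : 'rV[R]_n) : exists K : nat,
  forall i, - K%:R <= z ord0 i <= K%:R.
Proof.
exists (Num.bound (\sum_i `|z ord0 i|)) => i.
have s0 : 0 <= \sum_i `|z ord0 i| by rewrite sumr_ge0.
have h := archi_boundP s0.
rewrite -ler_norml; apply: le_trans (ltW h).
by rewrite (bigD1 i) //= lerDl sumr_ge0.
Qed.


Definition Qc (n K : nat) : set 'rV[R]_n :=
  [set z | forall i, - K%:R <= z ord0 i <= K%:R].

Lemma phi_null (d' : nat) (x : 'rV[R]_d'.+1) : lebesgue_outer (@Phi R d'.+1 x) = 0%E.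
Proof.
have hd : (0 < d'.+1)%N by [].
have HK K : lebesgue_outer (@Phi R d'.+1 x `&` Qc d'.+1 K) = 0%E.
  apply: (@null_generic d' _ (((6 * (2 * K + 3))%:R) ^+ d'.+1)
    (fun th j y => Qc d'.+1 K y /\ exists k, (1 <= k <= (2 * j) ^ d'.+1)%N /\
        distZ (k%:R *: x + y) < th / j%:R)).
  - by rewrite exprn_ge0.
  - move=> th /andP[th0 _] y [Py Qy]; have [J HJ] := @key R d'.+1 hd x y th th0 Py.
    by exists J => j Jj; split => //; exact: (HJ j Jj).2.
  - move=> th j thb j0; have [T [a [b [hs hc]]]] := @cover_phi R d'.+1 x K th j thb j0.
    exists T, a, b; split; last by move=> y [Qy hy]; exact: hc.
    rewrite hs exprMn ler_wpM2l ?exprn_ge0 //; apply: pow_le_self => //.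
    by case/andP: thb => /ltW -> ->.
apply/eqP; rewrite eq_le lo_ge0 andbT.
have -> : @Phi R d'.+1 x = \bigcup_K (@Phi R d'.+1 x `&` Qc d'.+1 K).
  apply/seteqP; split => [y Py|y [K _ [Py _]]] //.
  by have [K HK'] := cube_cover _ y; exists K.
apply: le_trans; first exact: (@lo_sigma_subadditive R d' (fun K => Phi x `&` Qc d'.+1 K)).
by rewrite eseries0 // => K _ _; rewrite HK.
Qed.

Lemma pi_null (d' : nat) : lebesgue_outer (pair_set (@Pi R d'.+1)) = 0%E.
Proof.
have hd : (0 < d'.+1)%N by [].
have HK K : lebesgue_outer (pair_set (@Pi R d'.+1) `&` Qc (d'.+1 + d'.+1) K) = 0%E.
  change (@lebesgue_outer R (d' + d'.+1).+1 (pair_set (@Pi R d'.+1) `&` Qc (d'.+1 + d'.+1) K) = 0%E).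
  refine (@null_generic (d' + d'.+1) (pair_set (@Pi R d'.+1) `&` Qc (d'.+1 + d'.+1) K) (((6 * (2 * K + 1) * (2 * K + 3))%:R) ^+ d'.+1)
    (fun th j (z : 'rV[R]_(d'.+1 + d'.+1)) => Qc (d'.+1 + d'.+1) K z /\ exists k, (1 <= k <= (2 * j) ^ d'.+1)%N /\
        distZ (k%:R *: lsubmx z + rsubmx z) < th / j%:R) _ _ _).
  - by rewrite exprn_ge0.
  - move=> th /andP[th0 _] z [Pz Qz]; have [J HJ] := @key R d'.+1 hd _ _ th th0 Pz.
    by exists J => j Jj; split => //; exact: (HJ j Jj).2.
  - move=> th j thb j0; have [T [a [b [hs hc]]]] := @cover_pi R d'.+1 K th j thb j0.
    exists T, a, b; split; last by move=> y [Qy hy]; exact: hc.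
    apply: le_trans hs _.
    rewrite exprMn ler_wpM2l ?exprn_ge0 //; apply: pow_le_self => //.
    by case/andP: thb => /ltW -> ->.
apply/eqP; rewrite eq_le (@lo_ge0 R (d' + d'.+1)) andbT.
have -> : pair_set (@Pi R d'.+1) = \bigcup_K (pair_set (@Pi R d'.+1) `&` Qc (d'.+1 + d'.+1) K).
  apply/seteqP; split => [y Py|y [K _ [Py _]]] //.
  by have [K HK'] := cube_cover _ y; exists K.
apply: le_trans (@lo_sigma_subadditive R (d' + d'.+1) _) _.
by rewrite eseries0 // => K _ _; rewrite HK.
Qed.

End Final.

Theorem theorem2 (R : realType) (d : nat) (hd : (0 < d)%N) :
  lebesgue_measurable (pair_set (@Pi R d)) /\
  lebesgue_outer (pair_set (@Pi R d)) = 0%E /\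
  (forall x : 'rV[R]_d, lebesgue_outer (@Phi R d x) = 0%E).
Proof.
case: d hd => // d' _.
have h0 := pi_null R d'.
split; last by split => //; exact: phi_null.
rewrite /lebesgue_measurable.
apply: (@le_caratheodory_measurable R 'rV[R]_((d' + d'.+1).+1)) => X.
change (lebesgue_outer (X `&` pair_set (@Pi R d'.+1)) +
        lebesgue_outer (X `&` ~` pair_set (@Pi R d'.+1)) <= @lebesgue_outer R (d'.+1 + d'.+1) X)%E.
have -> : lebesgue_outer (X `&` pair_set (@Pi R d'.+1)) = 0%E.
  apply/eqP; rewrite eq_le (@lo_ge0 R (d' + d'.+1)) andbT -h0.
  by apply: (@lo_le R (d' + d'.+1)) => z [].
by rewrite add0e (@lo_le R (d' + d'.+1)) // => z [].
Qed.
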